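(* For every $\delta\in(0,1)$ there exists $c(\delta)>0$ such that the following holds. Let $N\in\mathbb N$, let $p_1,\dots,p_N\in[0,1/2]$, and let $\Omega$ be a random subset of $\{1,\dots,N\}$ in which each $i$ belongs to $\Omega$ independently of the others with probability $p_i$. Let $\omega:=\mathbb E\#\Omega=\sum_{i=1}^N p_i$ and suppose $\omega\ge c(\delta)$. Then, with $\mathcal R$ the event $\{(1-\delta)\omega\le\#\Omega\le 5\omega\}$, $$\mathbb E(\#\Omega\mid\mathcal R)\ge\mathbb E\#\Omega.$$
   Context: $\#\Omega$ denotes the cardinality of $\Omega$. *)

(* Defs.v *)
From mathcomp Require Import all_boot all_order all_algebra.
From mathcomp Require Import reals.
Set Implicit Arguments. Unset Strict Implicit. Unset Printing Implicit Defensive.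
Import Order.TTheory GRing.Theory Num.Theory.
Local Open Scope ring_scope.

Section Bern.
Variables (R : realType) (N : nat) (p : 'I_N -> R).

Definition subset_prob (S : {set 'I_N}) : R :=
  (\prod_(i in S) p i) * (\prod_(i in ~: S) (1 - p i)).

Definition Prob (E : {set {set 'I_N}}) : R := \sum_(S in E) subset_prob S.

Definition exp_card : R := \sum_(S : {set 'I_N}) subset_prob S * #|S|%:R.

Definition cond_exp_card (E : {set {set 'I_N}}) : R :=
  (\sum_(S in E) subset_prob S * #|S|%:R) / Prob E.

Definition omega : R := \sum_(i < N) p i.

Definition event_R (delta : R) : {set {set 'I_N}} :=
  [set S : {set 'I_N} | ((1 - delta) * omega <= #|S|%:R) && (#|S|%:R <= 5 * omega)].
End Bern.

(* Main.v *)
Require Import Defs.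
From mathcomp Require Import all_boot all_order all_algebra.
From mathcomp Require Import reals.
From mathcomp Require Import sequences exp.
From mathcomp Require Import ring lra.
Import Order.TTheory GRing.Theory Num.Theory.
Local Open Scope ring_scope.


From mathcomp Require Import zify.

Lemma natb n : (n * 5 ^ n <= 3 * 6 ^ n)%N.
Proof.
elim: n => [//|n IH].
case: n IH => [|[|[|[|[|n]]]]] // IH.
rewrite !expnS in IH *.

nia.
Qed.

Lemma e15 (R : realType) : expR (1/5 : R) <= 5/4.
Proof.
have h := expR_ge1Dx (- (1/5) : R).
have h2 := expR_gt0 (1/5 : R).
rewrite expRN in h.
have h3 : (4/5 : R) <= (expR (1/5))^-1 by lra.
rewrite -[X in X <= _]invrK -[X in _ <= X]invrK.
rewrite lef_pV2 ?posrE ?invr_gt0 //; last lra.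
have -> : ((5/4 : R)^-1) = 4/5 by field.
lra.
Qed.

Lemma e75 (R : realType) : expR (7/5 : R) <= 5.
Proof.
have -> : (7/5 : R) = 7%:R * (1/5) by field.
rewrite expRM_natl.
apply: (@le_trans _ _ ((5/4 : R) ^+ 7)).
  apply: lerXn2r; rewrite ?nnegrE ?expR_ge0 //; first lra.
  exact: e15.
rewrite !exprS expr0; lra.
Qed.

Lemma tailb (R : realType) (w : R) n :
  5 * w < n%:R -> n%:R <= 3 * 6 ^+ n * expR (- (7 * w)).
Proof.
move=> h.
have A : (n%:R * 5 ^+ n <= 3 * 6 ^+ n :> R).
  have := natb n; rewrite -(ler_nat R) !natrM !natrX; done.
have B : expR (7 * w) <= 5 ^+ n.
  apply: (@le_trans _ _ (expR (n%:R * (7/5)))).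
    rewrite ler_expR; lra.
  rewrite expRM_natl; apply: lerXn2r; rewrite ?nnegrE ?expR_ge0 //; exact: e75.

have C := expR_gt0 (7 * w).
have D : 1 <= 5 ^+ n * expR (- (7 * w)).
  by rewrite expRN ler_pdivlMr // mul1r.
have E : (0 <= n%:R :> R) by rewrite ler0n.
have F : 0 <= expR (- (7 * w)) := expR_ge0 _.
nra.
Qed.

Section L.
Variables (R : realType) (N : nat) (p : 'I_N -> R).

Lemma gf (a : 'I_N -> R) :
  \sum_(S : {set 'I_N}) subset_prob p S * \prod_(i in S) a i =
  \prod_i (p i * a i + (1 - p i)).
Proof.
rewrite (@bigA_distr _ _ _ _ _ _ (fun i => p i * a i) (fun i => 1 - p i)).
apply: eq_bigr => S _.
rewrite [RHS](bigID (fun i => i \in S)) /= /subset_prob.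
rewrite [X in _ = X * _](eq_bigr (fun i => p i * a i)); last by move=> i iS; rewrite iS.
rewrite [X in _ = _ * X](eq_bigr (fun i => 1 - p i)); last by move=> i iS; rewrite (negbTE iS).
rewrite big_split /= mulrAC; congr (_ * _).
by apply: eq_bigl => i; rewrite in_setC.
Qed.

Lemma sumP1 : \sum_(S : {set 'I_N}) subset_prob p S = 1.
Proof.
transitivity (\sum_(S : {set 'I_N}) subset_prob p S * \prod_(i in S) (fun _ => 1 : R) i).
  by apply: eq_bigr => S _; rewrite big1 ?mulr1.
rewrite gf; apply: big1 => i _; lra.
Qed.

Lemma expc : exp_card p = omega p.
Proof.
rewrite /exp_card /omega.
have C (S : {set 'I_N}) : (#|S|%:R : R) = \sum_j ((j \in S)%:R : R).
  rewrite -sum1_card natr_sum big_mkcond /=; apply: eq_bigr => j _; by case: (j \in S).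
under eq_bigr => S _ do rewrite C mulr_sumr.
rewrite exchange_big /=; apply: eq_bigr => i _.
have H := gf (fun j => (j != i)%:R).
have E1 : \prod_j (p j * (j != i)%:R + (1 - p j)) = 1 - p i.
  rewrite (bigD1 i) //= eqxx mulr0 add0r big1 ?mulr1 // => j /negbTE ji.
  rewrite ji mulr1; lra.
have E2 S : \prod_(j in S) ((j != i)%:R : R) = 1 - (i \in S)%:R.
  case: (boolP (i \in S)) => iS.
    by rewrite (bigD1 i) //= eqxx mul0r subrr.
  rewrite big1 ?subr0 // => j jS; rewrite (_ : j != i) //.
  by apply: contraNneq iS => <-.
have H2 : \sum_(S : {set 'I_N}) subset_prob p S * (1 - (i \in S)%:R) = 1 - p i.
  by rewrite -E1 -H; apply: eq_bigr => S _; rewrite E2.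
have H3 : \sum_(S : {set 'I_N}) subset_prob p S * (1 - (i \in S)%:R) =
   \sum_(S : {set 'I_N}) subset_prob p S - \sum_(S : {set 'I_N}) subset_prob p S * (i \in S)%:R.
  by rewrite -sumrB; apply: eq_bigr => S _; rewrite mulrBr mulr1.
rewrite sumP1 in H3.
lra.
Qed.

Lemma sum6 : \sum_(S : {set 'I_N}) subset_prob p S * 6%:R ^+ #|S| =
  \prod_i (1 + 5%:R * p i).
Proof.
transitivity (\sum_(S : {set 'I_N}) subset_prob p S * \prod_(i in S) (fun _ => 6%:R : R) i).
  by apply: eq_bigr => S _; rewrite prodr_const.
rewrite gf; apply: eq_bigr => i _; lra.
Qed.

Hypothesis hp : forall i, 0 <= p i <= 2^-1.

Lemma prod_exp : \prod_i (1 + 5%:R * p i) <= expR (5%:R * omega p).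
Proof.
rewrite /omega mulr_sumr expR_sum; apply: ler_prod => i _.
have := hp i; move=> /andP[h1 h2].
apply/andP; split; first lra.
exact: expR_ge1Dx.
Qed.

Lemma Pge0 S : 0 <= subset_prob p S.
Proof.
rewrite /subset_prob; apply: mulr_ge0; apply: prodr_ge0 => i _;
  have := hp i; move=> /andP[h1 h2]; lra.
Qed.

Lemma e2p (x : R) : 0 <= x <= 2^-1 -> expR (- (2%:R * x)) <= 1 - x.
Proof.
move=> /andP[h1 h2].
have h3 := expR_ge1Dx (2%:R * x).
have h4 := expR_gt0 (2%:R * x).
rewrite expRN -div1r ler_pdivrMr //.
nra.
Qed.

Lemma P0 : expR (- (2%:R * omega p)) <= subset_prob p set0.
Proof.
rewrite /subset_prob big_set0 mul1r /omega mulr_sumr -sumrN expR_sum.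
rewrite setC0 [X in _ <= X](eq_bigl (fun i => true)); last by move=> i; rewrite in_setT.
apply: ler_prod => i _; apply/andP; split; first exact: expR_ge0.
exact: e2p.
Qed.

Lemma cardE' (S : {set 'I_N}) : (#|S|%:R : R) = \sum_j ((j \in S)%:R : R).
Proof.
rewrite -sum1_card natr_sum big_mkcond /=; apply: eq_bigr => j _; by case: (j \in S).
Qed.

Variable delta : R.
Hypothesis d1 : 0 < delta.
Hypothesis d2 : 0 < 1 - delta.
Hypothesis hw : 3 <= omega p.

Lemma set0_notin : set0 \notin event_R p delta.
Proof.
rewrite inE cards0; apply/negP => /andP[h _].
have : 0 < (1 - delta) * omega p.
  by apply: mulr_gt0 => //; apply: lt_le_trans hw.
move: h; rewrite (_ : (0%N%:R : R) = 0) //; lra.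
Qed.

Lemma tail_neg : \sum_(S | S \notin event_R p delta)
   subset_prob p S * (#|S|%:R - omega p) <= 0.
Proof.
rewrite (bigD1 set0) /=; last exact: set0_notin.
rewrite cards0 sub0r.
set w := omega p.
have hw' : 3 <= w := hw.
set e := expR (- (7 * w)).
have e0 : 0 <= e by exact: expR_ge0.
apply: (@le_trans _ _ (subset_prob p set0 * (- w) +
   \sum_(S : {set 'I_N}) subset_prob p S * (3 * 6 ^+ #|S| * e))).
  apply: lerD => //.
  rewrite [X in X <= _]big_mkcond /=; apply: ler_sum => S _.
  have P0S := Pge0 S.
  have h6 : 0 <= 3 * 6 ^+ #|S| * e :> R by rewrite !mulr_ge0 // exprn_ge0.
  case: ifP => [/andP[SE _]|_]; last by rewrite mulr_ge0.
  rewrite inE negb_and -!ltNge in SE.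
  case/orP: SE => h.
    have h' : (#|S|%:R < (1 - delta) * w) := h.
    have hw0 : 0 <= w by lra.
    have hdw : 0 <= delta * w by apply: mulr_ge0; [exact: ltW | exact: hw0].
    have : (#|S|%:R - w <= 0) by lra.
    nra.
  have h' : 5 * w < #|S|%:R := h.
  have := @tailb R w #|S| h'; rewrite -/e => h2.
  have h3 : (0 <= w) by lra.
  nra.
have -> : \sum_(S : {set 'I_N}) subset_prob p S * (3 * 6 ^+ #|S| * e) =
   3 * e * \sum_(S : {set 'I_N}) subset_prob p S * 6%:R ^+ #|S|.
  by rewrite mulr_sumr; apply: eq_bigr => S _; ring.
rewrite sum6.
have h1 := prod_exp.
have h2 := P0.
have h3 : e * expR (5%:R * w) = expR (- (2%:R * w)).
  by rewrite /e -expRD; congr expR; ring.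
have h4 := expR_ge0 (- (2%:R * w)).
have h5 : 0 <= \prod_i (1 + 5%:R * p i).
  by apply: prodr_ge0 => i _; have := hp i; case/andP => a b; lra.
rewrite -/w in h1 h2.
have h6 : 3 * e * \prod_i (1 + 5%:R * p i) <= 3 * expR (- (2%:R * w)).
  rewrite -h3 -mulrA; apply: ler_wpM2l => //; exact: ler_wpM2l.
have h7 : expR (- (2%:R * w)) * w <= subset_prob p set0 * w.
  by apply: ler_wpM2r => //; lra.
nra.
Qed.

Lemma main_ineq : 0 < Prob p (event_R p delta) ->
  exp_card p <= cond_exp_card p (event_R p delta).
Proof.
move=> hP.
rewrite /cond_exp_card expc ler_pdivlMr //.
set w := omega p.
have hw' : 3 <= w := hw.
have Z : \sum_(S : {set 'I_N}) subset_prob p S * (#|S|%:R - w) = 0.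
  under eq_bigr do rewrite mulrBr.
  rewrite sumrB -mulr_suml sumP1 -/(exp_card p) expc; rewrite -/w; ring.
rewrite (bigID (fun S => S \in event_R p delta)) /= in Z.
have T := tail_neg.
have -> : Prob p (event_R p delta) = \sum_(S | S \in event_R p delta) subset_prob p S by [].
have : \sum_(S | S \in event_R p delta) subset_prob p S * (#|S|%:R - w) =
  \sum_(S | S \in event_R p delta) subset_prob p S * #|S|%:R -
  w * \sum_(S | S \in event_R p delta) subset_prob p S.
  rewrite mulr_sumr -sumrB; apply: eq_bigr => S _; ring.
rewrite -/w in T.
lra.
Qed.

Lemma Prob_pos : 0 < Prob p (event_R p delta).
Proof.
set w := omega p.
have hw' : 3 <= w := hw.
set T := [set i | 0 < p i].
have hT : 2 * w <= #|T|%:R.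
  rewrite cardE' /w /omega mulr_sumr; apply: ler_sum => i _.
  rewrite inE; have := hp i; case/andP => a b.
  case: (boolP (0 < p i)) => h /=.
    rewrite mulr1n; lra.
  move: h; rewrite -leNgt mulr0n => h; lra.
have w0 : 0 <= w by lra.
set m := (Num.truncn w).+1.
have [hm1 hm2] : (Num.truncn w)%:R <= w /\ w < m%:R.
  by have /andP[] := Num.Theory.truncn_itv w0.
have hmT : (m <= #|T|)%N.
  rewrite /m Num.Theory.truncn_lt_nat //; lra.
set S0 := [set x in take m (enum T)].
have cS0 : #|S0| = m.
  rewrite cardsE; move/card_uniqP: (take_uniq m (enum_uniq T)) => ->.
  by rewrite size_takel // -cardE.
have sS0 i : i \in S0 -> 0 < p i.
  rewrite inE => /mem_take; rewrite mem_enum inE; done.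
have S0E : S0 \in event_R p delta.
  rewrite inE cS0;   have : (m%:R : R) = (Num.truncn w)%:R + 1 by rewrite /m -natr1.
  move=> hm; rewrite -/w.
  have hdw : 0 <= delta * w by apply: mulr_ge0; [exact: ltW | exact: w0].
  apply/andP; split; lra.
have PS0 : 0 < subset_prob p S0.
  rewrite /subset_prob; apply: mulr_gt0; apply: prodr_gt0 => i hi.
    exact: sS0.
  have := hp i; case/andP => a b; lra.
rewrite /Prob (bigD1 S0) //=.
have : 0 <= \sum_(S | (S \in event_R p delta) && (S != S0)) subset_prob p S.
  by apply: sumr_ge0 => S _; exact: Pge0.
lra.
Qed.
End L.

Theorem lemma2 (R : realType) (delta : R) :
  0 < delta < 1 ->
  exists c : R, 0 < c /\
    forall (N : nat) (p : 'I_N -> R),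
      (forall i, 0 <= p i <= 2^-1) ->
      c <= omega p ->
      0 < Prob p (event_R p delta) /\
      exp_card p <= cond_exp_card p (event_R p delta).
Proof.
move=> /andP[d1 d2]; rewrite -subr_gt0 in d2; exists 3; split; first by [].
move=> N p hp hw; split; first exact: Prob_pos.
apply: main_ineq => //; exact: Prob_pos.
Qed.
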